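(* Let $N\ge 2$, $c\in\mathbb{R}$, and consider Jacobi parameters $a_1,\dots,a_{N-1}>0$, $b_1,\dots,b_N\in\mathbb{R}$ with $\sum_{j=1}^N b_j=c$, equipped with the Poisson bracket described in the context. Let $P_n$ be the monic orthogonal polynomials defined in the context. Then for every $1\le n\le N-1$ and every $w\in\mathbb{C}$, \[ \{a_n^2, P_n(w)\} = -\tfrac12\, a_n^2\, P_{n-1}(w). \]
   Context: The Poisson bracket on functions of $(a_1,\dots,a_{N-1},b_1,\dots,b_N)$ is the bilinear antisymmetric bracket satisfying the Leibniz rule whose only nonzero brackets among the coordinates are $\{b_k,a_k\}=-\tfrac14 a_k$ for $k=1,\dots,N-1$ and $\{b_k,a_{k-1}\}=\tfrac14 a_{k-1}$ for $k=2,\dots,N$ (all brackets $\{a_i,a_j\}$, $\{b_i,b_j\}$ and all other $\{b_i,a_j\}$ vanish). Brackets of functions depending on auxiliary complex variables such as $w$ are computed with these variables held fixed. The monic polynomials are defined by $P_{-1}=0$, $P_0=1$, $P_{j+1}(x)=(x-b_{j+1})P_j(x)-a_j^2P_{j-1}(x)$; equivalently $P_n(x)=\det(x-J_n)$ where $J_n$ is the $n\times n$ tridiagonal matrix with diagonal $b_1,\dots,b_n$ and off-diagonal entries $a_1,\dots,a_{n-1}$. *)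

(* Defs.v *)
From HB Require Import structures.
From mathcomp Require Import all_boot all_order all_algebra.
From mathcomp Require Import mpoly.
Set Implicit Arguments. Unset Strict Implicit. Unset Printing Implicit Defensive.
Import Order.TTheory GRing.Theory Num.Theory.
Local Open Scope ring_scope.

(* Coordinates (a_1..a_{N-1}, b_1..b_N) are the 2N-1 variables of the
   polynomial ring {mpoly C[(N.-1 + N.-1).+1]}:
     a_k  (1 <= k <= N-1)  is variable number k-1,
     b_k  (1 <= k <= N)    is variable number (N-1) + (k-1).            *)
Section Jacobi.
Variable C : numClosedFieldType.
Variable N : nat.

Definition nvar := (N.-1 + N.-1).+1.
Definition Fun := {mpoly C[nvar]}.

Definition avar (k : nat) : Fun := 'X_(inord k.-1).
Definition bvar (k : nat) : Fun := 'X_(inord (N.-1 + k.-1)).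

(* {a_k, b_m} for 1 <= k <= N-1, 1 <= m <= N, read off from
   {b_k,a_k} = -a_k/4 and {b_{k+1},a_k} = a_k/4, by antisymmetry. *)
Definition brack_ab (k m : nat) : Fun :=
  if m == k then (4%:R : C)^-1 *: avar k
  else if m == k.+1 then - ((4%:R : C)^-1 *: avar k)
  else 0.

Definition pmat (i j : nat) : Fun :=
  if ((i < N.-1) && (N.-1 <= j))%N then brack_ab i.+1 (j - N.-1)%N.+1
  else if ((j < N.-1) && (N.-1 <= i))%N then - brack_ab j.+1 (i - N.-1)%N.+1
  else 0.

(* The unique bilinear, antisymmetric, Leibniz bracket with the given
   coordinate brackets: {f,g} = sum_{i,j} {x_i,x_j} d_i f d_j g. *)
Definition pbracket (f g : Fun) : Fun :=
  \sum_(i < nvar) \sum_(j < nvar) pmat i j * (f^`M(i)) * (g^`M(j)).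

Fixpoint Ppair (w : C) (j : nat) : Fun * Fun :=
  match j with
  | 0 => (0, 1)
  | j'.+1 => let pq := Ppair w j' in
             (pq.2, (w%:MP - bvar j'.+1) * pq.2 - avar j' ^+ 2 * pq.1)
  end.

Definition Ppoly (w : C) (n : nat) : Fun := (Ppair w n).2.

Definition point (a b : nat -> C) (i : 'I_nvar) : C :=
  if ((i : nat) < N.-1)%N then a i.+1 else b (i - N.-1)%N.+1.

End Jacobi.

(* Main.v *)
Require Import Defs.
From HB Require Import structures.
From mathcomp Require Import all_boot all_order all_algebra.
From mathcomp Require Import mpoly zify ring.
Import Order.TTheory GRing.Theory Num.Theory.
Local Open Scope ring_scope.

Lemma dX (R : comNzRingType) n (i j : 'I_n) :
  ('X_i : {mpoly R[n]})^`M(j) = (i == j)%:R%:MP.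
Proof.
rewrite mderivX mnm1E; case: eqP => [->|_].
  by rewrite (_ : (U_(j) - U_(j))%MM = 0%MM) ?mpolyX0 ?scale1r //; apply/mnmP => k; rewrite mnmBE subnn mnm0E.
by rewrite !scale0r.
Qed.

Lemma dXne (R : comNzRingType) n (i j : 'I_n) :
  (i : nat) <> j -> ('X_i : {mpoly R[n]})^`M(j) = 0.
Proof. by move=> h; rewrite dX; case: eqP => // e; case: h; rewrite e. Qed.

Lemma dPpair (C : numClosedFieldType) (N : nat) (w : C) j (i : 'I_(nvar N)) :
  (N.-1 + j <= i)%N ->
  ((Ppair N w j).1)^`M(i) = 0 /\ ((Ppair N w j).2)^`M(i) = 0.
Proof.
have hi' := ltn_ord i.
elim: j => [|j IH] hi /=.
  by rewrite mderiv0 -mpolyC1 mderivC.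
have [IH1 IH2] := IH (ltnW (leq_trans (eq_leq (esym (addnS _ _))) hi)).
split => //.
rewrite mderivB !mderivM IH1 IH2 ?mulr0 ?addr0.
rewrite mderivB mderivC /bvar dXne; last first.
  rewrite /= inordK; last by apply: leq_ltn_trans hi'; apply: leq_trans hi; rewrite addnS ltnW.
  by move=> e; move: hi; rewrite -e /= addnS ltnn.
rewrite subr0 mul0r add0r /avar dXne ?mul0r ?mulr0 ?addr0 ?oppr0 //; last first.
  rewrite inordK; last by move: hi hi'; rewrite /nvar; lia.
  move=> e; move: hi; rewrite -e.
  clear IH IH1 IH2; move: hi'; rewrite /nvar; lia.
by rewrite mul0r oppr0.
Qed.

Theorem lemma2p2 (C : numClosedFieldType) (N : nat) (c : C)
  (a b : nat -> C) :
  (2 <= N)%N ->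
  c \is Num.real ->
  (forall k, (1 <= k <= N.-1)%N -> 0 < a k) ->
  (forall k, (1 <= k <= N)%N -> b k \is Num.real) ->
  \sum_(1 <= j < N.+1) b j = c ->
  forall n, (1 <= n <= N.-1)%N -> forall w : C,
    (@pbracket C N (avar C N n ^+ 2) (Ppoly N w n)).@[@point C N a b]
    = (- ((2%:R : C)^-1 *: (avar C N n ^+ 2 * Ppoly N w n.-1))).@[@point C N a b].
Proof.
move=> hN _ _ _ _ n hn w; congr (_.@[_]).
set ia : 'I_(nvar N) := inord n.-1.
have hia : nat_of_ord ia = n.-1 by rewrite /ia inordK //; move: hn; rewrite /nvar; lia.
set jb : 'I_(nvar N) := inord (N.-1 + n.-1).
have hjb : nat_of_ord jb = (N.-1 + n.-1)%N by rewrite /jb inordK //; move: hn; rewrite /nvar; lia.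
have df : forall i, (avar C N n ^+ 2)^`M(i) = if i == ia then 2%:R *: avar C N n else 0.
  move=> i; rewrite expr2 mderivM /avar dX -/ia.
  case: (eqVneq i ia) => [<-|h].
    by rewrite (_ : true%:R = 1 :> C) // mpolyC1 mulr1 mul1r scaler_nat mulr2n.
  by rewrite (_ : false%:R = 0 :> C) // mpolyC0 mul0r mulr0 addr0.
rewrite /pbracket (bigD1 ia) //= [X in _ + X]big1 ?addr0; last first.
  move=> i hi; apply: big1 => j _; rewrite df (negPf hi).
  by rewrite mulr0 mul0r.
rewrite (bigD1 jb) //= [X in _ + X]big1 ?addr0; last first.
  move=> j hj.
  have hj' : nat_of_ord j <> (N.-1 + n.-1)%N.
    by move=> e; move/eqP: hj; apply; apply: val_inj; rewrite /= hjb e.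
  case: (eqVneq (nat_of_ord j) (N.-1 + n)%N) => [e|ne].
    have [_ d2] := @dPpair C N w n j (eq_leq (esym e)).
    by rewrite /Ppoly d2 mulr0.
  move/eqP: ne => ne.
  rewrite /pmat hia.
  case: ifP => [/andP[h1 h2]|_].
    rewrite /brack_ab ifF; last by apply/eqP; lia.
    by rewrite ifF ?mul0r //; apply/eqP; lia.
  case: ifP => [/andP[h1 h2]|_]; last by rewrite !mul0r.
  lia.
rewrite df eqxx.
have hpm : pmat C N ia jb = (4%:R : C)^-1 *: avar C N n.
  rewrite /pmat hia hjb.
  have -> : ((n.-1 < N.-1) && (N.-1 <= N.-1 + n.-1))%N by apply/andP; split; lia.
  have hn1 : n.-1.+1 = n by lia.
  by rewrite /brack_ab addKn hn1 eqxx.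
have hdP : (Ppoly N w n)^`M(jb) = - Ppoly N w n.-1.
  case: n hn ia hia jb hjb df hpm => [//|m] hm ia hia jb hjb df hpm /=.
  have [d1 d2] := @dPpair C N w m jb (eq_leq (esym hjb)).
  rewrite /Ppoly /= mderivB !mderivM d1 d2 !mulr0 !addr0 mderivB mderivC /bvar /=.
  have ejb : (inord (N.-1 + m) == jb :> 'I_(nvar N)) = true.
    apply/eqP/val_inj; rewrite /= inordK; last by move: hm; rewrite /nvar; lia.
    by rewrite hjb.
  rewrite dX ejb (_ : true%:R = 1 :> C) // mpolyC1.
  rewrite /avar dXne; last first.
    rewrite hjb inordK; last by move: hm; rewrite /nvar; lia.
    lia.
  by rewrite mul0r mulr0 addr0 mul0r subr0 sub0r mulN1r.
rewrite hpm hdP -!mul_mpolyC.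
have e : ((4%:R : C)^-1)%:MP * (2%:R : C)%:MP = ((2%:R : C)^-1)%:MP :> Fun C N.
  rewrite -mpolyCM; congr (_%:MP).
  have h2 : (2%:R : C) != 0 by rewrite pnatr_eq0.
  have h4 : (4%:R : C) = 2%:R * 2%:R by rewrite -natrM.
  by rewrite h4 invfM -mulrA mulVf ?mulr1.
rewrite -e.
ring.
Qed.
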